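(* Consider $\Gamma_T(p,q)$, let $\sigma^*_{p,q}$, $\tau^*_{p,q}$ be security strategies of players 1 and 2, and $x^*_{p,q}$, $y^*_{p,q}$ their realization plans. Then $\mu^*\in\mathbb R^{|K|}$ with $\mu^{*k}=-w_{k,0}(y^*_{p,q})$ for all $k\in K$ is an optimal solution of $\min_{\mu\in\mathbb R^{|K|}}\{\tilde V^1_T(\mu,q)-p^T\mu\}$, and $\nu^*\in\mathbb R^{|L|}$ with $\nu^{*l}=-u_{l,0}(x^*_{p,q})$ for all $l\in L$ is an optimal solution of $\max_{\nu\in\mathbb R^{|L|}}\{\tilde V^2_T(p,\nu)-q^T\nu\}$.
   Context: Setting: nonempty finite type sets $K,L$, action sets $A,B$, payoff $M:K\times L\times A\times B\to\mathbb R$, $p\in\Delta(K),q\in\Delta(L)$ with positive entries. In $\Gamma_T(p,q)$, $k\sim p$, $l\sim q$ are drawn independently and told privately to players 1 and 2; for $T$ stages both choose actions simultaneously, publicly announced; behavior strategies depend on own type and both action histories; payoff $\gamma_T=\mathbb E[\sum_{t=1}^TM(k,l,a_t,b_t)]$ to player 1 (maximizer); value $V_T(p,q)$; security strategies attain $\max_\sigma\min_\tau\gamma_T$ (player 1) resp. $\min_\tau\max_\sigma\gamma_T$ (player 2). The realization plan of $\sigma$ is $x^{a_t}_{k,h^A_t,h^B_t}=p^k\prod_{s=1}^t\sigma^{a_s}_s(k,h^A_s,h^B_s)$ (similarly for $\tau$ with $q$). For $x$ the realization plan of $\sigma$: $u_{l,0}(x)=\min_{\tau(l)}\sum_kp^k\mathbb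 E_{\sigma,\tau(l)}[\sum_{s=1}^TM(k,l,a_s,b_s)\mid k,l]$ (minimum over strategies of player 2 of type $l$); for $y$ the realization plan of $\tau$: $w_{k,0}(y)=\max_{\sigma(k)}\sum_lq^l\mathbb E_{\sigma(k),\tau}[\sum_{s=1}^TM\mid k,l]$. Dual games: in $\tilde\Gamma^1_T(\mu,q)$ ($\mu\in\mathbb R^{|K|}$) player 1 chooses his own type $k$ (by a distribution of his choice, hidden from player 2), nature draws $l\sim q$ and tells player 2, $T$ stages are played, payoff to player 1 $\mathbb E[\mu^k+\sum_{t=1}^TM(k,l,a_t,b_t)]$, value $\tilde V^1_T(\mu,q)$. In $\tilde\Gamma^2_T(p,\nu)$ ($\nu\in\mathbb R^{|L|}$) nature draws $k\sim p$ and tells player 1, player 2 chooses $l$ himself, payoff $\mathbb E[\nu^l+\sum_{t=1}^TM]$, value $\tilde V^2_T(p,\nu)$. *)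

(* Defs.v *)
From HB Require Import structures.
From mathcomp Require Import all_boot all_order all_algebra.
From mathcomp Require Import boolp classical_sets reals.
Set Implicit Arguments. Unset Strict Implicit. Unset Printing Implicit Defensive.
Import Order.TTheory GRing.Theory Num.Theory.
Local Open Scope ring_scope.
Local Open Scope classical_set_scope.

Section RepeatedGame.
Variables (R : realType) (K L A B : finType).

Definition is_dist (I : finType) (f : I -> R) :=
  (forall i, 0 <= f i) /\ \sum_(i : I) f i = 1.

(* Behavior strategy of one type of player 1 (resp. 2): at each stage, given
   the action history hA of player 1 and hB of player 2 (both of length t-1),
   a probability distribution on A (resp. B). *)
Definition bstrat1 := seq A -> seq B -> A -> R.
Definition bstrat2 := seq A -> seq B -> B -> R.

Definition valid1 (s : bstrat1) := forall hA hB, is_dist (s hA hB).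
Definition valid2 (t : bstrat2) := forall hA hB, is_dist (t hA hB).

Definition strat1 (sigma : K -> bstrat1) := forall k, valid1 (sigma k).
Definition strat2 (tau : L -> bstrat2) := forall l, valid2 (tau l).

Fixpoint cont_pay (m : A -> B -> R) (s : bstrat1) (t : bstrat2) (n : nat)
    (hA : seq A) (hB : seq B) : R :=
  match n with
  | 0 => 0
  | n'.+1 => \sum_(a : A) \sum_(b : B)
       s hA hB a * t hA hB b * (m a b + cont_pay m s t n' (rcons hA a) (rcons hB b))
  end.

Definition cpay (m : A -> B -> R) (s : bstrat1) (t : bstrat2) (T : nat) : R :=
  cont_pay m s t T [::] [::].

Definition gammaT (p : K -> R) (q : L -> R) (M : K -> L -> A -> B -> R) (T : nat)
    (sigma : K -> bstrat1) (tau : L -> bstrat2) : R :=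
  \sum_(k : K) \sum_(l : L) p k * q l * cpay (M k l) (sigma k) (tau l) T.

Definition guar1 p q M T sigma : R :=
  inf [set r | exists tau, strat2 tau /\ r = gammaT p q M T sigma tau].
Definition guar2 p q M T tau : R :=
  sup [set r | exists sigma, strat1 sigma /\ r = gammaT p q M T sigma tau].

Definition security1 p q M T (sigma : K -> bstrat1) :=
  strat1 sigma /\
  guar1 p q M T sigma = sup [set r | exists s, strat1 s /\ r = guar1 p q M T s].
Definition security2 p q M T (tau : L -> bstrat2) :=
  strat2 tau /\
  guar2 p q M T tau = inf [set r | exists t, strat2 t /\ r = guar2 p q M T t].

(* realization plans (recorded for reference; u and w below are defined, as in
   the paper, through the strategies, and depend on them only via these plans) *)
Definition real_plan1 (p : K -> R) (sigma : K -> bstrat1) (k : K)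
    (hA : seq A) (hB : seq B) (a : A) : R :=
  p k * (\prod_(s < size hA) sigma k (take s hA) (take s hB) (nth a hA s))
      * sigma k hA hB a.
Definition real_plan2 (q : L -> R) (tau : L -> bstrat2) (l : L)
    (hA : seq A) (hB : seq B) (b : B) : R :=
  q l * (\prod_(s < size hB) tau l (take s hA) (take s hB) (nth b hB s))
      * tau l hA hB b.

(* u_{l,0}(x) for x the realization plan of sigma *)
Definition u_l0 (p : K -> R) M T (sigma : K -> bstrat1) (l : L) : R :=
  inf [set r | exists t, valid2 t /\
        r = \sum_(k : K) p k * cpay (M k l) (sigma k) t T].
(* w_{k,0}(y) for y the realization plan of tau *)
Definition w_k0 (q : L -> R) M T (tau : L -> bstrat2) (k : K) : R :=
  sup [set r | exists s, valid1 s /\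
        r = \sum_(l : L) q l * cpay (M k l) s (tau l) T].

(* Dual game ~Gamma^1_T(mu,q): player 1 picks his type with a distribution pi
   (hidden), then plays sigma; value = max min (the game has a value). *)
Definition pay_dual1 (mu : K -> R) (q : L -> R) M T (pi : K -> R)
    (sigma : K -> bstrat1) (tau : L -> bstrat2) : R :=
  \sum_(k : K) pi k * (mu k + \sum_(l : L) q l * cpay (M k l) (sigma k) (tau l) T).
Definition Vdual1 (mu : K -> R) (q : L -> R) M T : R :=
  sup [set r | exists pi sigma, is_dist pi /\ strat1 sigma /\
        r = inf [set g | exists tau, strat2 tau /\ g = pay_dual1 mu q M T pi sigma tau]].

Definition pay_dual2 (p : K -> R) (nu : L -> R) M T (sigma : K -> bstrat1)
    (rho : L -> R) (tau : L -> bstrat2) : R :=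
  \sum_(l : L) rho l * (nu l + \sum_(k : K) p k * cpay (M k l) (sigma k) (tau l) T).
Definition Vdual2 (p : K -> R) (nu : L -> R) M T : R :=
  sup [set r | exists sigma, strat1 sigma /\
        r = inf [set g | exists rho tau, is_dist rho /\ strat2 tau /\
                   g = pay_dual2 p nu M T sigma rho tau]].

End RepeatedGame.

(* Main.v *)
Require Import Defs.
From HB Require Import structures.
From mathcomp Require Import all_boot all_order all_algebra.
From mathcomp Require Import boolp classical_sets reals.
From mathcomp Require Import ring lra.
Import Order.TTheory GRing.Theory Num.Theory.
Local Open Scope ring_scope.
Set Implicit Arguments. Unset Strict Implicit. Unset Printing Implicit Defensive.

Section Gordan.
Variable R : realFieldType.

Lemma sep_lemma (I : finType) (P Q : pred I) (f g : I -> R) :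
  (forall i j, P i -> Q j -> f i < g j) ->
  exists t, (forall i, P i -> f i < t) /\ (forall j, Q j -> t < g j).
Proof.
move=> H.
case: (pickP P) => [i0 Pi0|P0]; case: (pickP Q) => [j0 Qj0|Q0].
- case: (@arg_maxP _ R I i0 P f Pi0) => i1 Pi1 Hi1.
  case: (@arg_minP _ R I j0 Q g Qj0) => j1 Qj1 Hj1.
  have h := H _ _ Pi1 Qj1.
  exists ((f i1 + g j1) / 2); split.
    move=> i Pi; apply: (le_lt_trans (Hi1 i Pi)).
    by rewrite ltr_pdivlMr // mulrDr mulr1 ltrD2l.
  move=> j Qj; apply: (lt_le_trans _ (Hj1 j Qj)).
  by rewrite ltr_pdivrMr // mulrDr mulr1 ltrD2r.
- case: (@arg_maxP _ R I i0 P f Pi0) => i1 Pi1 Hi1.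
  exists (f i1 + 1); split; last by move=> j; rewrite Q0.
  by move=> i Pi; apply: (le_lt_trans (Hi1 i Pi)); rewrite ltrDl.
- case: (@arg_minP _ R I j0 Q g Qj0) => j1 Qj1 Hj1.
  exists (g j1 - 1); split; first by move=> i; rewrite P0.
  by move=> j Qj; apply: (lt_le_trans _ (Hj1 j Qj)); rewrite ltrBlDr ltrDl.
- by exists 0; split => [i|j]; rewrite ?P0 ?Q0.
Qed.


Lemma gordan n : forall (J : finType) (S : pred J) (a : J -> 'I_n -> R),
  (exists x : 'I_n -> R, forall j, S j -> 0 < \sum_r a j r * x r) \/
  (exists mu : J -> R, [/\ forall j, 0 <= mu j, forall j, ~~ S j -> mu j = 0,
     exists j, 0 < mu j & forall r, \sum_j mu j * a j r = 0]).
Proof.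
elim: n => [|n IH] J S a.
  case: (pickP S) => [j0 Sj0 | S0].
    right; exists (fun j => (j == j0)%:R); split.
    - by move=> j; rewrite ler0n.
    - by move=> j; case: eqP => // ->; rewrite Sj0.
    - by exists j0; rewrite eqxx ltr01.
    - by case.
  by left; exists (fun _ => 0) => j; rewrite S0.
pose c := fun j => a j ord_max.
pose a' := fun j (r : 'I_n) => a j (lift ord_max r).
pose J' := (J + (J * J))%type.
pose S' : pred J' := fun j' => match j' with
   | inl j => S j && (c j == 0)
   | inr pq => [&& S pq.1, S pq.2, 0 < c pq.1 & c pq.2 < 0] end.
pose a'' : J' -> 'I_n -> R := fun j' r => match j' with
   | inl j => a' j r
   | inr pq => c pq.1 * a' pq.2 r - c pq.2 * a' pq.1 r end.
have sumS : forall j x, \sum_(r < n.+1) a j r * x r =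
    \sum_(r < n) a' j r * x (lift ord_max r) + c j * x ord_max.
  move=> j x; rewrite big_ord_recr /=; congr (_ + _); apply: eq_bigr => r _.
  by have -> : widen_ord (leqnSn n) r = lift ord_max r
    by apply: val_inj; rewrite /= /bump leqNgt ltn_ord.
case: (IH J' S' a'') => [[x' Hx']|[mu' [mu0 muS [j1 muj1] mueq]]].
  left.
  pose e := fun j => \sum_r a' j r * x' r.
  have Hsep : forall i j, (S i && (0 < c i)) -> (S j && (c j < 0)) ->
      - e i / c i < - e j / c j.
    move=> i j /andP[Si ci] /andP[Sj cj].
    have := Hx' (inr (i,j)); rewrite /= Si Sj ci cj => /(_ isT).
    have -> : \sum_r (c i * a' j r - c j * a' i r) * x' r = c i * e j - c j * e i.
      rewrite /e !big_distrr -sumrB; apply: eq_bigr => r _ /=; ring.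
    have ci0 : c i != 0 by rewrite gt_eqF.
    have cj0 : c j != 0 by rewrite lt_eqF.
    set u := - e i / c i; set v := - e j / c j.
    have -> : e i = - u * c i by rewrite /u mulNr divfK // opprK.
    have -> : e j = - v * c j by rewrite /v mulNr divfK // opprK.
    have hc : 0 < c i * - c j by rewrite mulr_gt0 // oppr_gt0.
    move=> h; nra.
  have [t [Ht1 Ht2]] := sep_lemma Hsep.
  exists (fun r => if unlift ord_max r is Some r' then x' r' else t).
  move=> j Sj; rewrite sumS unlift_none.
  under eq_bigr do rewrite liftK.
  rewrite -/(e j).
  case: (ltrgt0P (c j)) => cj.
  - have := Ht1 j; rewrite Sj cj => /(_ isT).
    have cj0 : c j != 0 by rewrite gt_eqF.
    set u := - e j / c j.
    have -> : e j = - u * c j by rewrite /u mulNr divfK // opprK.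
    move=> h; nra.
  - have := Ht2 j; rewrite Sj cj => /(_ isT).
    have cj0 : c j != 0 by rewrite lt_eqF.
    set u := - e j / c j.
    have -> : e j = - u * c j by rewrite /u mulNr divfK // opprK.
    move=> h; nra.
  - have := Hx' (inl j); rewrite /= Sj cj eqxx => /(_ isT).
    by rewrite -/(e j) mul0r addr0.
right.
have nn1 : forall p q, 0 <= mu' (inr (p, q)) * - c q.
  move=> p q; case hS: (S' (inr (p,q))).
    by move: hS => /and4P[_ _ _ cq]; rewrite mulr_ge0 // oppr_ge0 ltW.
  by rewrite muS ?hS // mul0r.
have nn2 : forall p q, 0 <= mu' (inr (p, q)) * c p.
  move=> p q; case hS: (S' (inr (p,q))).
    by move: hS => /and4P[_ _ cp _]; rewrite mulr_ge0 // ltW.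
  by rewrite muS ?hS // mul0r.
pose mu := fun j => mu' (inl j) + \sum_q mu' (inr (j, q)) * - c q
                   + \sum_p mu' (inr (p, j)) * c p.
exists mu; split.
- move=> j; rewrite /mu; apply: addr_ge0; first apply: addr_ge0 => //.
    by apply: sumr_ge0 => q _.
  by apply: sumr_ge0 => p _.
- move=> j Sj; rewrite /mu muS /= ?(negbTE Sj) // add0r.
  rewrite !big1 ?addr0 // => i _; rewrite muS ?mul0r //= ?(negbTE Sj) ?andbF //.
- case: j1 muj1 => [j|[p q]] hj.
    exists j; rewrite /mu -addrA; apply: (lt_le_trans hj); rewrite lerDl.
    by apply: addr_ge0; apply: sumr_ge0 => i _; [exact: nn1|exact: nn2].
  exists p; rewrite /mu.
  have hS : S' (inr (p, q)).
    by apply/negPn/negP => hS; move: hj; rewrite muS // ltxx.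
  move: hS => /and4P[_ _ _ cq].
  have h1 : 0 < mu' (inr (p, q)) * - c q by rewrite mulr_gt0 // oppr_gt0.
  apply: (lt_le_trans h1).
  rewrite -addrA addrC -addrA; apply: ler_wpDr.
    by apply: addr_ge0; [apply: sumr_ge0 => i _; exact: nn2 | exact: mu0].
  rewrite (bigD1 q) //= lerDl; apply: sumr_ge0 => i _; exact: nn1.
- move=> r.
  have -> : \sum_j mu j * a j r = \sum_j mu' (inl j) * a j r +
     \sum_p \sum_q mu' (inr (p, q)) * (c p * a q r - c q * a p r).
    rewrite /mu.
    under eq_bigr do rewrite !mulrDl.
    rewrite !big_split /= -addrA; congr (_ + _).
    have -> : \sum_j (\sum_q mu' (inr (j, q)) * - c q) * a j r =
        \sum_p \sum_q mu' (inr (p, q)) * (- c q * a p r).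
      apply: eq_bigr => p _; rewrite big_distrl; apply: eq_bigr => q _ /=.
      by rewrite mulrA.
    have -> : \sum_j (\sum_p mu' (inr (p, j)) * c p) * a j r =
        \sum_p \sum_q mu' (inr (p, q)) * (c p * a q r).
      rewrite exchange_big /=; apply: eq_bigr => p _; rewrite big_distrl.
      by apply: eq_bigr => q _ /=; rewrite mulrA.
    rewrite -big_split /=; apply: eq_bigr => p _; rewrite -big_split /=.
    by apply: eq_bigr => q _; ring.
  case: (unliftP ord_max r) => [r'|] ->.
    rewrite pair_big /=; apply: (etrans _ (mueq r')); rewrite big_sumType /=.
    by congr (_ + _); apply: eq_bigr => [[p q]] _.
  rewrite big1; last first.
    move=> j _; case hS: (S' (inl j)).
      by move: hS => /andP[_ /eqP]; rewrite /c => ->; rewrite mulr0.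
    by rewrite muS ?hS // mul0r.
  rewrite add0r big1 // => p _; rewrite big1 // => q _.
  by rewrite /c; ring.
Qed.

End Gordan.

Lemma sum_rank (R : realType) (J : finType) (F : 'I_#|J| -> R) :
  \sum_r F r = \sum_j F (enum_rank j).
Proof. by rewrite (reindex enum_rank) //; apply: onW_bij; exact: enum_rank_bij. Qed.

Lemma sum_delta_ord (R : realType) (J : finType) (F : 'I_#|J| -> R) j :
  \sum_r (enum_rank j == r)%:R * F r = F (enum_rank j).
Proof.
rewrite (bigD1 (enum_rank j)) //= eqxx mul1r big1 ?addr0 // => r hr.
by rewrite eq_sym (negbTE hr) mul0r.
Qed.

Lemma ville (R : realType) (I J : finType) (G : I -> J -> R) (lam : R) (j0 : J) :
  (exists x : I -> R, is_dist x /\ forall j, lam <= \sum_i x i * G i j) \/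
  (exists y : J -> R, is_dist y /\ forall i, \sum_j y j * G i j < lam).
Proof.
have := @gordan R #|J| (I + J)%type predT
  (fun ij r => match ij with inl i => lam - G i (enum_val r)
                          | inr j => (enum_rank j == r)%:R end).
case=> [[x Hx]|[mu [mu0 _ [j1 hj1] meq]]].
  right.
  pose z j := x (enum_rank j).
  have Hz : forall j, 0 < z j by move=> j; have := Hx (inr j) isT; rewrite sum_delta_ord.
  have HG : forall i, 0 < \sum_j (lam - G i j) * z j.
    move=> i; have := Hx (inl i) isT; rewrite sum_rank.
    by under eq_bigr do rewrite enum_rankK.
  pose S := \sum_j z j.
  have S0 : 0 < S.
    rewrite /S (bigD1 j0) //=; apply: ltr_wpDr; last exact: Hz.
    by apply: sumr_ge0 => j _; apply: ltW.
  exists (fun j => z j / S); split; first split.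
  - by move=> j; rewrite divr_ge0 // ltW.
  - by rewrite -big_distrl /= -/S mulfV // gt_eqF.
  move=> i.
  have -> : \sum_j z j / S * G i j = (\sum_j z j * G i j) / S.
    by rewrite big_distrl; apply: eq_bigr => j _ /=; rewrite mulrAC.
  rewrite ltr_pdivrMr //.
  have := HG i.
  have -> : \sum_j (lam - G i j) * z j = lam * S - \sum_j z j * G i j.
    by rewrite /S big_distrr -sumrB; apply: eq_bigr => j _ /=; ring.
  by rewrite subr_gt0.
left.
have Heq : forall j, \sum_i mu (inl i) * (lam - G i j) + mu (inr j) = 0.
  move=> j; have := meq (enum_rank j); rewrite big_sumType /= enum_rankK.
  have -> // : \sum_i mu (inr i) * (enum_rank i == enum_rank j)%:R = mu (inr j).
  rewrite (bigD1 j) //= eqxx mulr1 big1 ?addr0 // => i hi.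
  by rewrite (inj_eq enum_rank_inj) (negbTE hi) mulr0.
pose s := \sum_i mu (inl i).
have s0 : 0 < s.
  rewrite lt_def sumr_ge0 ?andbT //; apply/eqP => hs.
  have mi : forall i, mu (inl i) = 0.
    by move=> i; apply: (psumr_eq0P (P := predT) (F := fun i => mu (inl i))).
  have mj : forall j, mu (inr j) = 0.
    by move=> j; have := Heq j; rewrite big1 ?add0r // => i _; rewrite mi mul0r.
  by move: hj1; case: j1 => [i|j]; rewrite ?mi ?mj ltxx.
exists (fun i => mu (inl i) / s); split; first split.
- by move=> i; rewrite divr_ge0 // ltW.
- by rewrite -big_distrl /= -/s mulfV // gt_eqF.
move=> j.
have -> : \sum_i mu (inl i) / s * G i j = (\sum_i mu (inl i) * G i j) / s.
  by rewrite big_distrl; apply: eq_bigr => i _ /=; rewrite mulrAC.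
rewrite ler_pdivlMr //.
have := Heq j.
have -> : \sum_i mu (inl i) * (lam - G i j) = lam * s - \sum_i mu (inl i) * G i j.
  by rewrite /s big_distrr -sumrB; apply: eq_bigr => i _ /=; ring.
move=> h; have := mu0 (inr j); lra.
Qed.

Lemma le_sum_term (R : realType) (I : finType) (F : I -> R) i :
  (forall j, 0 <= F j) -> F i <= \sum_j F j.
Proof. by move=> h; rewrite (bigD1 i) //= lerDl sumr_ge0. Qed.

Section Strat.
Variables (R : realType) (A B : finType).

Definition delta (a : A) : A -> R := fun a' => (a' == a)%:R.

Lemma sum_delta (F : A -> R) a : \sum_a' delta a a' * F a' = F a.
Proof.
rewrite (bigD1 a) //= /delta eqxx mul1r big1 ?addr0 // => a' h.
by rewrite (negbTE h) mul0r.
Qed.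

Lemma delta_dist a : is_dist (delta a).
Proof.
split; first by move=> a'; rewrite /delta ler0n.
by have := sum_delta (fun _ => 1) a; under eq_bigr do rewrite mulr1.
Qed.

Lemma cont_bound m (s : bstrat1 R A B) (t : bstrat2 R A B) n hA hB :
  valid1 s -> valid2 t ->
  `|cont_pay m s t n hA hB| <= n%:R * \sum_a \sum_b `|m a b|.
Proof.
move=> vs vt; elim: n hA hB => [|n IH] hA hB /=; first by rewrite normr0 mul0r.
set Bm := \sum_a \sum_b `|m a b|.
have hB0 : forall a b, `|m a b| <= Bm.
  move=> a b; apply: le_trans (le_sum_term _ _) => //; last first.
    by move=> a'; apply: sumr_ge0.
  by apply: le_sum_term.
have [s0 s1] := vs hA hB; have [t0 t1] := vt hA hB.
apply: le_trans (ler_norm_sum _ _ _) _.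
apply: (le_trans (y := \sum_a \sum_b s hA hB a * t hA hB b * ((n.+1)%:R * Bm))).
  apply: ler_sum => a _; apply: le_trans (ler_norm_sum _ _ _) _.
  apply: ler_sum => b _; rewrite normrM ger0_norm ?mulr_ge0 //.
  apply: ler_wpM2l; first by rewrite mulr_ge0.
  apply: le_trans (ler_normD _ _) _.
  by rewrite -addn1 natrD mulrDl mul1r addrC lerD.
have st1 : forall K, \sum_a \sum_b s hA hB a * t hA hB b * K = K.
  move=> K; rewrite -[RHS]mul1r -s1 big_distrl /=; apply: eq_bigr => a _.
  by rewrite -big_distrl -big_distrr /= t1 mulr1.
by rewrite st1.
Qed.

Section Kuhn.
Variables (I : finType) (x : I -> R) (ss : I -> bstrat1 R A B) (s0 : bstrat1 R A B).

Fixpoint Wr (i : I) (rA : seq A) (rB : seq B) : R :=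
  match rA, rB with
  | a :: rA', b :: rB' => Wr i rA' rB' * ss i (rev rA') (rev rB') a
  | _, _ => x i end.
Definition W i hA hB := Wr i (rev hA) (rev hB).

Lemma W_rcons i hA hB a b : W i (rcons hA a) (rcons hB b) = W i hA hB * ss i hA hB a.
Proof. by rewrite /W !rev_rcons /= !revK. Qed.

Lemma W_nil i : W i [::] [::] = x i. Proof. by []. Qed.

Hypothesis hx : is_dist x.
Hypothesis hss : forall i, valid1 (ss i).
Hypothesis hs0 : valid1 s0.

Lemma W_ge0 i hA hB : 0 <= W i hA hB.
Proof.
rewrite /W; elim: (rev hA) (rev hB) => [|a rA IH] [|b rB] /=; try exact: hx.1.
by rewrite mulr_ge0 //; have [] := hss i (rev rA) (rev rB).
Qed.

Definition kuhn : bstrat1 R A B := fun hA hB a =>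
  let D := \sum_i W i hA hB in
  if D == 0 then s0 hA hB a else (\sum_i W i hA hB * ss i hA hB a) / D.

Lemma kuhn_valid : valid1 kuhn.
Proof.
move=> hA hB; rewrite /kuhn; set D := \sum_i W i hA hB.
case: eqP => [_|D0]; first exact: hs0.
have Dp : 0 < D by rewrite lt_def sumr_ge0 ?andbT; [exact/eqP | move=> i _; apply: W_ge0].
split.
  move=> a; apply: divr_ge0; last exact: ltW; apply: sumr_ge0 => i _.
  by rewrite mulr_ge0 ?W_ge0 //; have [] := hss i hA hB.
rewrite -big_distrl /= exchange_big /=.
rewrite (eq_bigr (fun i => W i hA hB)) ?mulfV //; first exact/eqP.
by move=> i _; rewrite -big_distrr /=; have [_ ->] := hss i hA hB; rewrite mulr1.
Qed.

Lemma kuhn_eq m t n hA hB :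
  (\sum_i W i hA hB) * cont_pay m kuhn t n hA hB =
  \sum_i W i hA hB * cont_pay m (ss i) t n hA hB.
Proof.
elim: n hA hB => [|n IH] hA hB /=.
  by rewrite mulr0 big1 // => i _; rewrite mulr0.
set D := \sum_i W i hA hB.
have [D0|D0] := eqVneq D 0.
  have W0 : forall i, W i hA hB = 0.
    by move=> i; apply: (psumr_eq0P (P := predT) (F := fun i => W i hA hB)) => // j _; apply: W_ge0.
  by rewrite D0 mul0r big1 // => i _; rewrite W0 mul0r.
have Dp : 0 < D by rewrite lt_def D0 /=; apply: sumr_ge0 => i _; apply: W_ge0.
transitivity (\sum_a \sum_b \sum_i W i hA hB * (ss i hA hB a * t hA hB b *
      (m a b + cont_pay m (ss i) t n (rcons hA a) (rcons hB b)))); last first.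
  symmetry; rewrite (eq_bigr (fun i => \sum_a \sum_b W i hA hB * (ss i hA hB a *
      t hA hB b * (m a b + cont_pay m (ss i) t n (rcons hA a) (rcons hB b))))); last first.
    move=> i _; rewrite big_distrr /=; apply: eq_bigr => a _.
    by rewrite big_distrr.
  by rewrite exchange_big /=; apply: eq_bigr => a _; rewrite exchange_big.
rewrite big_distrr /=; apply: eq_bigr => a _; rewrite big_distrr /=.
apply: eq_bigr => b _.
rewrite /kuhn -/D (negbTE D0).
set N := \sum_i W i hA hB * ss i hA hB a.
set C := cont_pay m kuhn t n (rcons hA a) (rcons hB b).
have IHab := IH (rcons hA a) (rcons hB b).
have E1 : \sum_i W i (rcons hA a) (rcons hB b) = N.
  by apply: eq_bigr => i _; rewrite W_rcons.
have E2 : \sum_i W i (rcons hA a) (rcons hB b) *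
    cont_pay m (ss i) t n (rcons hA a) (rcons hB b) =
  \sum_i W i hA hB * ss i hA hB a * cont_pay m (ss i) t n (rcons hA a) (rcons hB b).
  by apply: eq_bigr => i _; rewrite W_rcons.
rewrite E1 E2 -/C in IHab.
have -> : D * (N / D * t hA hB b * (m a b + C)) =
    t hA hB b * (N * m a b) + t hA hB b * (N * C).
  by field; rewrite gt_eqF.
rewrite IHab /N big_distrl /= !big_distrr -big_split /=.
apply: eq_bigr => i _; ring.
Qed.

Lemma kuhn_cpay m t n :
  cont_pay m kuhn t n [::] [::] = \sum_i x i * cont_pay m (ss i) t n [::] [::].
Proof.
have := kuhn_eq m t n [::] [::]; rewrite /W /=.
by have [_ ->] := hx; rewrite mul1r.
Qed.


End Kuhn.

Definition upd (s : bstrat1 R A B) (h : seq A * seq B) (d : A -> R) : bstrat1 R A B :=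
  fun hA hB => if (hA == h.1) && (hB == h.2) then d else s hA hB.

Lemma cont_far m s t h d n hA hB : (size h.1 < size hA)%N ->
  cont_pay m (upd s h d) t n hA hB = cont_pay m s t n hA hB.
Proof.
elim: n hA hB => // n IH hA hB hs /=.
have -> : upd s h d hA hB = s hA hB.
  rewrite /upd; case: eqP => [e|] //=; by rewrite e ltnn in hs.
apply: eq_bigr => a _; apply: eq_bigr => b _.
by rewrite IH // size_rcons ltnS ltnW.
Qed.

Lemma mix_lemma (d : A -> R) (u mm : R) (C : A -> R) : \sum_a d a = 1 ->
  \sum_a d a * (u * (mm + C a)) = u * (mm + \sum_a d a * C a).
Proof.
move=> hd.
rewrite (eq_bigr (fun a => u * mm * d a + u * (d a * C a))); last by move=> a _; ring.
by rewrite big_split /= -big_distrr -big_distrr /= hd; ring.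
Qed.

Lemma cont_aff m s t h d n hA hB : \sum_a d a = 1 ->
  cont_pay m (upd s h d) t n hA hB =
  \sum_a d a * cont_pay m (upd s h (delta a)) t n hA hB.
Proof.
move=> hd; elim: n hA hB => [|n IH] hA hB /=.
  by rewrite big1 // => a _; rewrite mulr0.
case E: ((hA == h.1) && (hB == h.2)).
  have hs : forall a, (size h.1 < size (rcons hA a))%N.
    by move: E => /andP[/eqP -> _] a; rewrite size_rcons.
  rewrite {1}/upd E.
  under eq_bigr do under eq_bigr do rewrite cont_far //.
  transitivity (\sum_a d a * \sum_b t hA hB b *
       (m a b + cont_pay m s t n (rcons hA a) (rcons hB b))).
    by apply: eq_bigr => a _; rewrite big_distrr /=; apply: eq_bigr => b _; rewrite mulrA.
  apply: eq_bigr => a _; congr (_ * _).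
  rewrite /upd E.
  under eq_bigr do under eq_bigr do rewrite cont_far //.
  rewrite -(sum_delta (fun a' => \sum_b t hA hB b *
       (m a' b + cont_pay m s t n (rcons hA a') (rcons hB b)))).
  by apply: eq_bigr => a' _; rewrite big_distrr /=; apply: eq_bigr => b _; rewrite mulrA.
rewrite {1}/upd E.
under eq_bigr do under eq_bigr do rewrite IH.
symmetry.
rewrite (eq_bigr (fun a => \sum_a' \sum_b d a * (s hA hB a' * t hA hB b *
   (m a' b + cont_pay m (upd s h (delta a)) t n (rcons hA a') (rcons hB b))))); last first.
  move=> a _; rewrite /upd E big_distrr /=; apply: eq_bigr => a' _.
  by rewrite big_distrr.
rewrite exchange_big /=; apply: eq_bigr => a' _.
rewrite exchange_big /=; apply: eq_bigr => b _.
by rewrite mix_lemma.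
Qed.

Section Phi.
Variables (J : finType) (c : J -> R) (mm : J -> A -> B -> R) (tt : J -> bstrat2 R A B)
  (n : nat).

Definition Phi (s : bstrat1 R A B) := \sum_j c j * cont_pay (mm j) s (tt j) n [::] [::].

Lemma Phi_aff s h d : \sum_a d a = 1 ->
  Phi (upd s h d) = \sum_a d a * Phi (upd s h (delta a)).
Proof.
move=> hd; rewrite /Phi.
under eq_bigr do rewrite (cont_aff _ _ _ _ _ _ _ hd) big_distrr /=.
rewrite exchange_big /=; apply: eq_bigr => a _.
by rewrite big_distrr /=; apply: eq_bigr => j _; ring.
Qed.

Lemma upd_id s h : upd s h (s h.1 h.2) = s.
Proof.
apply: funext => hA; apply: funext => hB; rewrite /upd.
by case: eqP => [->|] //=; case: eqP => [->|].
Qed.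

Lemma upd_valid s h d : valid1 s -> is_dist d -> valid1 (upd s h d).
Proof. by move=> vs hd hA hB; rewrite /upd; case: ifP. Qed.

Lemma improve s h : valid1 s -> exists a, Phi s <= Phi (upd s h (delta a)).
Proof.
move=> vs; have [d0 d1] := vs h.1 h.2.
have := Phi_aff s h d1; rewrite upd_id => ->.
case: (pickP (fun _ : A => true)) => [a0 _|A0]; last first.
  by move: d1; rewrite big_pred0 // => /eqP; rewrite eq_sym oner_eq0.
case: (@arg_maxP _ R A a0 xpredT (fun a => Phi (upd s h (delta a))) isT) => a1 _ Ha1.
exists a1; apply: (le_trans (y := \sum_a s h.1 h.2 a * Phi (upd s h (delta a1)))).
  by apply: ler_sum => a _; apply: ler_wpM2l => //; apply: Ha1.
by rewrite -big_distrl /= d1 mul1r.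
Qed.

Lemma derand (l : seq (seq A * seq B)) s : valid1 s ->
  exists s', [/\ valid1 s', Phi s <= Phi s' &
     forall h, h \in l -> exists a, s' h.1 h.2 = delta a].
Proof.
elim: l s => [|h l IH] s vs.
  by exists s; split.
have [s1 [vs1 le1 H1]] := IH s vs.
have [a Ha] := improve h vs1.
exists (upd s1 h (delta a)); split.
- by apply: upd_valid => //; apply: delta_dist.
- exact: le_trans Ha.
move=> h'; rewrite in_cons => /orP[/eqP ->|hl].
  by exists a; rewrite /upd !eqxx.
rewrite /upd; case: ifP => _; first by exists a.
exact: H1.
Qed.

End Phi.

Lemma cont_ext m (s s' : bstrat1 R A B) (t t' : bstrat2 R A B) n hA hB :
  (forall hA' hB', size hA' = size hB' ->
     (size hA <= size hA' < size hA + n)%N ->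
     s hA' hB' = s' hA' hB' /\ t hA' hB' = t' hA' hB') ->
  size hA = size hB ->
  cont_pay m s t n hA hB = cont_pay m s' t' n hA hB.
Proof.
elim: n hA hB => // n IH hA hB H hs /=.
have [-> ->] : s hA hB = s' hA hB /\ t hA hB = t' hA hB.
  by apply: H => //; rewrite leqnn /= -{1}(addn0 (size hA)) ltn_add2l.
apply: eq_bigr => a _; apply: eq_bigr => b _; congr (_ * (_ + _)).
apply: IH; last by rewrite !size_rcons hs.
move=> hA' hB' e /andP[h1 h2]; apply: H => //.
rewrite size_rcons in h1 h2; rewrite (ltnW h1) /=.
by rewrite addnS -addSn.
Qed.

End Strat.

Section Swap.
Variables (R : realType) (A B : finType).

Definition swapS (t : bstrat2 R A B) : bstrat1 R B A := fun hB hA => t hA hB.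
Definition swapT (s : bstrat1 R A B) : bstrat2 R B A := fun hB hA => s hA hB.

Lemma cont_swap m s t n hA hB :
  cont_pay m s t n hA hB = cont_pay (fun b a => m a b) (swapS t) (swapT s) n hB hA.
Proof.
elim: n hA hB => // n IH hA hB /=.
rewrite exchange_big /=; apply: eq_bigr => b _; apply: eq_bigr => a _.
by rewrite IH /swapS /swapT; congr (_ * _); rewrite mulrC.
Qed.

Lemma valid_swapS t : valid2 t -> valid1 (swapS t).
Proof. by move=> vt hB hA; exact: vt. Qed.

Lemma valid_swapS' t : valid1 (swapS t) -> valid2 t.
Proof. by move=> vt hA hB; exact: vt. Qed.

End Swap.
Set Implicit Arguments. Unset Strict Implicit. Unset Printing Implicit Defensive.
Fixpoint allseq (X : finType) (d : nat) : seq (seq X) :=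
  if d is d'.+1 then [seq rcons s a | s <- allseq X d', a <- enum X] else [:: [::]].

Lemma mem_allseq (X : finType) (s : seq X) : s \in allseq X (size s).
Proof.
elim/last_ind: s => [|s a IH] /=; first by rewrite mem_seq1.
rewrite size_rcons /=; apply: (allpairs_f (fun s a => rcons s a)) => //.
by rewrite mem_enum.
Qed.

Definition allup (X : finType) T := flatten [seq allseq X d | d <- iota 0 T].

Lemma mem_allup (X : finType) T (s : seq X) : (size s < T)%N -> s \in allup X T.
Proof.
move=> hs; apply/flatten_mapP; exists (size s); last exact: mem_allseq.
by rewrite mem_iota add0n hs.
Qed.

Section Game.
Variables (R : realType) (K L A B : finType) (a0 : A) (T : nat).

Definition hl : seq (seq A * seq B) := [seq (x, y) | x <- allup A T, y <- allup B T].
Definition dflt : seq A * seq B := ([::], [::]).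
Definition code1 := {ffun K * 'I_(size hl) -> A}.
Definition code_at (c : code1) k hA hB : A :=
  if [pick i : 'I_(size hl) | nth dflt hl i == (hA, hB)] is Some i then c (k, i) else a0.
Definition dec1 (c : code1) : K -> bstrat1 R A B :=
  fun k hA hB => delta R (code_at c k hA hB).

Lemma dec1_strat c : strat1 (dec1 c).
Proof. by move=> k hA hB; apply: delta_dist. Qed.

Lemma mem_hl hA hB : (size hA < T)%N -> (size hB < T)%N -> (hA, hB) \in hl.
Proof. by move=> h1 h2; apply: allpairs_f; apply: mem_allup. Qed.

Lemma pure_code (s : K -> bstrat1 R A B) :
  (forall k h, h \in hl -> exists a, s k h.1 h.2 = delta R a) ->
  exists c : code1, forall k hA hB, (hA, hB) \in hl -> dec1 c k hA hB = s k hA hB.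
Proof.
move=> H.
have /choice [f Hf] : forall ki : K * 'I_(size hl),
    exists a, s ki.1 (nth dflt hl ki.2).1 (nth dflt hl ki.2).2 = delta R a.
  by move=> [k i]; apply: H; apply: mem_nth.
exists [ffun ki => f ki] => k hA hB hin.
rewrite /dec1 /code_at; case: pickP => [i /eqP hi|h0].
  by rewrite ffunE -(Hf (k, i)) /= hi.
have hi : (index (hA, hB) hl < size hl)%N by rewrite index_mem.
by have := h0 (Ordinal hi); rewrite /= nth_index // eqxx.
Qed.

Lemma cpay_code (s : bstrat1 R A B) (c : code1) k m (t : bstrat2 R A B) :
  (forall hA hB, (hA, hB) \in hl -> dec1 c k hA hB = s hA hB) ->
  cpay m (dec1 c k) t T = cpay m s t T.
Proof.
move=> H; apply: cont_ext => // hA hB e /andP[_ h2]; split => //.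
by apply: H; apply: mem_hl; rewrite -?e; rewrite add0n in h2.
Qed.

Variables (M : K -> L -> A -> B -> R) (p : K -> R) (q : L -> R).
Hypothesis hp0 : forall k, 0 <= p k.

Lemma gammaE sg ta :
  gammaT p q M T sg ta = \sum_k p k * Phi q (M k) ta T (sg k).
Proof.
apply: eq_bigr => k _; rewrite /Phi big_distrr /=; apply: eq_bigr => l _.
by rewrite mulrA.
Qed.

Lemma derand1 sg ta : strat1 sg ->
  exists c : code1, gammaT p q M T sg ta <= gammaT p q M T (dec1 c) ta.
Proof.
move=> hs.
have /choice [s' Hs'] : forall k, exists s', [/\ valid1 s',
    Phi q (M k) ta T (sg k) <= Phi q (M k) ta T s' &
    forall h, h \in hl -> exists a, s' h.1 h.2 = delta R a].
  by move=> k; apply: derand.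
have [c Hc] : exists c : code1, forall k hA hB, (hA, hB) \in hl ->
    dec1 c k hA hB = s' k hA hB.
  by apply: pure_code => k; have [] := Hs' k.
exists c; rewrite !gammaE; apply: ler_sum => k _; apply: ler_wpM2l => //.
have [_ h _] := Hs' k; apply: (le_trans h); rewrite le_eqVlt; apply/orP; left.
apply/eqP; apply: eq_bigr => l _; congr (_ * _); symmetry.
exact: (cpay_code (M k l) (ta l) (Hc k)).
Qed.

Definition c0 : code1 := [ffun _ => a0].

Lemma mix1 (x : code1 -> R) : is_dist x ->
  exists sg, strat1 sg /\ forall ta,
    gammaT p q M T sg ta = \sum_c x c * gammaT p q M T (dec1 c) ta.
Proof.
move=> hx.
exists (fun k => kuhn x (fun c => dec1 c k) (dec1 c0 k)); split.
  move=> k; apply: kuhn_valid => // c; exact: dec1_strat.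
move=> ta; rewrite gammaE.
under [RHS]eq_bigr do rewrite gammaE big_distrr /=.
rewrite exchange_big /=; apply: eq_bigr => k _.
rewrite /Phi (eq_bigr (fun l => q l * \sum_c x c *
   cont_pay (M k l) (dec1 c k) (ta l) T [::] [::])); last first.
  by move=> l _; rewrite kuhn_cpay // => c; exact: dec1_strat.
transitivity (\sum_l \sum_c x c * (p k * (q l *
    cont_pay (M k l) (dec1 c k) (ta l) T [::] [::]))).
  rewrite big_distrr /=; apply: eq_bigr => l _; rewrite mulrA big_distrr /=.
  by apply: eq_bigr => c _; ring.
rewrite exchange_big /=; apply: eq_bigr => c _.
by rewrite -big_distrr -big_distrr.
Qed.

End Game.

Lemma cont_neg (R : realType) (A B : finType) (m : A -> B -> R) s t n hA hB :
  cont_pay (fun a b => - m a b) s t n hA hB = - cont_pay m s t n hA hB.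
Proof.
elim: n hA hB => [|n IH] hA hB /=; first by rewrite oppr0.
rewrite -sumrN; apply: eq_bigr => a _; rewrite -sumrN; apply: eq_bigr => b _.
by rewrite IH; ring.
Qed.

Section Main.
Variables (R : realType) (K L A B : finType) (M : K -> L -> A -> B -> R)
  (p : K -> R) (q : L -> R) (T : nat) (a0 : A) (b0 : B).
Hypotheses (hp : is_dist p) (hq : is_dist q).

Definition M' : L -> K -> B -> A -> R := fun l k b a => - M k l a b.
Definition code2 := code1 L B A T.
Definition dec2 (c : code2) : L -> bstrat2 R A B := fun l hA hB => dec1 R b0 c l hB hA.

Notation gam := (gammaT p q M T).
Notation gam' := (gammaT q p M' T).

Lemma gamma_swap sg ta :
  gam sg ta = - gam' (fun l => swapS (ta l)) (fun k => swapT (sg k)).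
Proof.
rewrite /gammaT exchange_big /= -sumrN; apply: eq_bigr => l _.
rewrite -sumrN; apply: eq_bigr => k _.
rewrite /cpay /M' cont_neg -cont_swap; ring.
Qed.

Lemma derand2 sg ta : strat2 ta ->
  exists c : code2, gam sg (dec2 c) <= gam sg ta.
Proof.
move=> ht.
have [c Hc] := derand1 b0 T M' (p := q) p (fun l => hq.1 l)
   (sg := fun l => swapS (ta l)) (fun k => swapT (sg k))
   (fun l => valid_swapS (ht l)).
by exists c; rewrite !gamma_swap lerN2.
Qed.

Lemma mix2 (y : code2 -> R) : is_dist y ->
  exists ta, strat2 ta /\ forall sg,
    gam sg ta = \sum_c y c * gam sg (dec2 c).
Proof.
move=> hy.
have [sg' [hs' Hs']] := mix1 b0 (T := T) M' q p hy.
exists (fun l hA hB => sg' l hB hA); split.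
  by move=> l hA hB; apply: hs'.
move=> sg; rewrite gamma_swap.
have -> : (fun l => swapS (fun hA hB => sg' l hB hA)) = sg' by [].
rewrite Hs' -sumrN; apply: eq_bigr => c _.
by rewrite gamma_swap mulrN.
Qed.

Lemma alternative lam :
  (exists sg, strat1 sg /\ forall ta, strat2 ta -> lam <= gam sg ta) \/
  (exists ta, strat2 ta /\ forall sg, strat1 sg -> gam sg ta < lam).
Proof.
have := ville (fun (c1 : code1 K A B T) (c2 : code2) => gam (dec1 R a0 c1) (dec2 c2))
  lam [ffun _ => b0].
case=> [[x [hx Hx]]|[y [hy Hy]]].
  left; have [sg [hs Hs]] := mix1 a0 (T := T) M p q hx.
  exists sg; split => // ta hta.
  have [c2 Hc2] := derand2 sg hta.
  by apply: le_trans Hc2; rewrite Hs.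
right; have [ta [ht Ht]] := mix2 hy.
exists ta; split => // sg hsg.
have [c1 Hc1] := derand1 a0 T M q (fun k => hp.1 k) ta hsg.
apply: le_lt_trans Hc1 _; rewrite Ht.
exact: Hy.
Qed.

End Main.
Local Open Scope classical_set_scope.

Section SupInf.
Variable R : realType.
Implicit Types S : set R.

Lemma inf_le_el S x C : (forall y, S y -> C <= y) -> S x -> inf S <= x.
Proof. by move=> hC hx; apply: ge_inf => //; exists C => y /hC. Qed.

Lemma le_inf_all S x : nonempty S -> (forall y, S y -> x <= y) -> x <= inf S.
Proof. by move=> ne hx; apply: lb_le_inf => // y /hx. Qed.

Lemma sup_ge_el S x C : (forall y, S y -> y <= C) -> S x -> x <= sup S.
Proof. by move=> hC hx; apply: ub_le_sup => //; exists C => y /hC. Qed.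

Lemma sup_le_all S x : nonempty S -> (forall y, S y -> y <= x) -> sup S <= x.
Proof. by move=> ne hx; apply: ge_sup => // y /hx. Qed.

Lemma avg_bound (I : finType) (w X : I -> R) C :
  is_dist w -> (forall i, `|X i| <= C) -> `|\sum_i w i * X i| <= C.
Proof.
move=> [w0 w1] hX; apply: le_trans (ler_norm_sum _ _ _) _.
rewrite -[X in _ <= X]mul1r -w1 big_distrl /=; apply: ler_sum => i _.
by rewrite normrM ger0_norm // ler_wpM2l.
Qed.

End SupInf.

Section Final.
Variables (R : realType) (K L A B : finType) (M : K -> L -> A -> B -> R)
  (p : K -> R) (q : L -> R) (T : nat) (a0 : A) (b0 : B).
Hypotheses (hp : is_dist p) (hq : is_dist q).
Variables (sigma_s : K -> bstrat1 R A B) (tau_s : L -> bstrat2 R A B).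
Hypotheses (hsig : security1 p q M T sigma_s) (htau : security2 p q M T tau_s).

Notation gam := (gammaT p q M T).
Definition Bg := T%:R * \sum_k \sum_l \sum_a \sum_b `|M k l a b|.

Lemma cpay_bnd k l s t : valid1 s -> valid2 t -> `|cpay (M k l) s t T| <= Bg.
Proof.
move=> vs vt; apply: le_trans (cont_bound _ _ _ _ vs vt) _.
apply: ler_wpM2l; first exact: ler0n.
apply: le_trans (le_sum_term _ _) => [|k']; last by do 3!(apply: sumr_ge0 => ? _).
by apply: le_trans (le_sum_term _ _) => [|l']; last by do 2!(apply: sumr_ge0 => ? _).
Qed.

Lemma phi_bnd k s ta : valid1 s -> strat2 ta -> `|Phi q (M k) ta T s| <= Bg.
Proof. by move=> vs ht; apply: avg_bound => // l; apply: cpay_bnd. Qed.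

Lemma psi_bnd l sg t : strat1 sg -> valid2 t ->
  `|\sum_k p k * cpay (M k l) (sg k) t T| <= Bg.
Proof. by move=> hs vt; apply: avg_bound => // k; apply: cpay_bnd. Qed.

Lemma gam_bnd sg ta : strat1 sg -> strat2 ta -> `|gam sg ta| <= Bg.
Proof. by move=> hs ht; rewrite gammaE; apply: avg_bound => // k; apply: phi_bnd. Qed.

Lemma normlo (x C : R) : `|x| <= C -> - C <= x.
Proof. by rewrite ler_norml => /andP[]. Qed.
Lemma normhi (x C : R) : `|x| <= C -> x <= C.
Proof. by rewrite ler_norml => /andP[]. Qed.

Lemma g1 sg ta : strat1 sg -> strat2 ta -> guar1 p q M T sg <= gam sg ta.
Proof.
move=> hs ht; apply: (inf_le_el (C := - Bg)); last by exists ta.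
by move=> y [t [ht' ->]]; apply: normlo; apply: gam_bnd.
Qed.

Lemma g2 sg lam : strat1 sg -> (forall ta, strat2 ta -> lam <= gam sg ta) ->
  lam <= guar1 p q M T sg.
Proof.
move=> hs H; apply: le_inf_all; first by exists (gam sg tau_s), tau_s; split => //; case: htau.
by move=> y [t [ht ->]]; apply: H.
Qed.

Lemma g3 sg ta : strat1 sg -> strat2 ta -> gam sg ta <= guar2 p q M T ta.
Proof.
move=> hs ht; apply: (sup_ge_el (C := Bg)); last by exists sg.
by move=> y [s [hs' ->]]; apply: normhi; apply: gam_bnd.
Qed.

Lemma g4 ta lam : strat2 ta -> (forall sg, strat1 sg -> gam sg ta <= lam) ->
  guar2 p q M T ta <= lam.
Proof.
move=> ht H; apply: sup_le_all; first by exists (gam sigma_s ta), sigma_s; split => //; case: hsig.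
by move=> y [s [hs ->]]; apply: H.
Qed.

Lemma g5 sg : strat1 sg -> guar1 p q M T sg <= guar1 p q M T sigma_s.
Proof.
move=> hs; case: hsig => hs0 ->; apply: (sup_ge_el (C := Bg)); last by exists sg.
move=> y [s [hs' ->]]; apply: le_trans (g1 hs' (htau.1)) _.
by apply: normhi; apply: gam_bnd => //; case: htau.
Qed.

Lemma g6 ta : strat2 ta -> guar2 p q M T tau_s <= guar2 p q M T ta.
Proof.
move=> ht; case: htau => ht0 ->; apply: (inf_le_el (C := - Bg)); last by exists ta.
move=> y [t [ht' ->]]; apply: le_trans (g3 hsig.1 ht').
by apply: normlo; apply: gam_bnd => //; case: hsig.
Qed.

Lemma minimax : guar2 p q M T tau_s <= guar1 p q M T sigma_s.
Proof.
rewrite leNgt; apply/negP => H.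
pose lam := (guar1 p q M T sigma_s + guar2 p q M T tau_s) / 2.
have h1 : guar1 p q M T sigma_s < lam.
  by rewrite /lam ltr_pdivlMr // mulrDr mulr1 ltrD2l.
have h2 : lam < guar2 p q M T tau_s.
  by rewrite /lam ltr_pdivrMr // mulrDr mulr1 ltrD2r.
case: (alternative M T a0 b0 hp hq lam) => [[sg [hs Hs]]|[ta [ht Ht]]].
  have := le_trans (g2 hs Hs) (g5 hs); lra.
have := le_trans (g6 ht) (g4 ht (fun sg hs => ltW (Ht sg hs))); lra.
Qed.


Lemma gamE2 sg ta :
  gam sg ta = \sum_l q l * \sum_k p k * cpay (M k l) (sg k) (ta l) T.
Proof.
rewrite /gammaT exchange_big /=; apply: eq_bigr => l _; rewrite big_distrr /=.
by apply: eq_bigr => k _ /=; ring.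
Qed.

Lemma c1 : \sum_k p k * w_k0 q M T tau_s k <= guar2 p q M T tau_s.
Proof.
apply/ler_addgt0Pr => e e0.
have /choice [s Hs] : forall k, exists s, valid1 s /\
    w_k0 q M T tau_s k - e < Phi q (M k) tau_s T s.
  move=> k; rewrite /w_k0.
  have hS : has_sup [set r | exists s, valid1 s /\ r = \sum_l q l * cpay (M k l) s (tau_s l) T].
    split; first by exists (Phi q (M k) tau_s T (sigma_s k)), (sigma_s k); split => //; case: hsig.
    by exists Bg => y [s [vs ->]]; apply: normhi; apply: phi_bnd => //; case: htau.
  have [y [s [vs ->]] hy] := sup_adherent e0 hS.
  by exists s.
have hs : strat1 s by move=> k; case: (Hs k).
have := g3 hs htau.1; rewrite gammaE => h.
rewrite -lerBlDr; apply: le_trans h.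
have -> : \sum_k p k * w_k0 q M T tau_s k - e =
    \sum_k p k * (w_k0 q M T tau_s k - e).
  by rewrite -[e in LHS]mul1r -hp.2 big_distrl -sumrB; apply: eq_bigr => k _ /=; ring.
apply: ler_sum => k _; apply: ler_wpM2l; first exact: hp.1.
by case: (Hs k) => _ /ltW.
Qed.

Lemma c2 : guar1 p q M T sigma_s <= \sum_l q l * u_l0 p M T sigma_s l.
Proof.
apply/ler_addgt0Pr => e e0.
have /choice [t Ht] : forall l, exists t, valid2 t /\
    \sum_k p k * cpay (M k l) (sigma_s k) t T < u_l0 p M T sigma_s l + e.
  move=> l; rewrite /u_l0.
  have hS : has_inf [set r | exists t, valid2 t /\ r = \sum_k p k * cpay (M k l) (sigma_s k) t T].
    split; first by exists (\sum_k p k * cpay (M k l) (sigma_s k) (tau_s l) T), (tau_s l);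
      split => //; case: htau.
    by exists (- Bg) => y [t [vt ->]]; apply: normlo; apply: psi_bnd => //; case: hsig.
  have [y [t [vt ->]] hy] := inf_adherent e0 hS.
  by exists t.
have ht : strat2 t by move=> l; case: (Ht l).
apply: le_trans (g1 hsig.1 ht) _; rewrite gamE2.
have -> : \sum_l q l * u_l0 p M T sigma_s l + e =
    \sum_l q l * (u_l0 p M T sigma_s l + e).
  by rewrite -[e in LHS]mul1r -hq.2 big_distrl -big_split; apply: eq_bigr => l _ /=; ring.
apply: ler_sum => l _; apply: ler_wpM2l; first exact: hq.1.
by case: (Ht l) => _ /ltW.
Qed.

Lemma pay1_bnd mu pi sg ta : is_dist pi -> strat1 sg -> strat2 ta ->
  `|pay_dual1 mu q M T pi sg ta| <= \sum_k `|mu k| + Bg.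
Proof.
move=> hpi hs ht; apply: avg_bound => // k.
apply: le_trans (ler_normD _ _) _; apply: lerD.
  by apply: le_sum_term => k'; apply: normr_ge0.
exact: (phi_bnd k (hs k) ht).
Qed.

Lemma pay2_bnd nu sg rho ta : is_dist rho -> strat1 sg -> strat2 ta ->
  `|pay_dual2 p nu M T sg rho ta| <= \sum_l `|nu l| + Bg.
Proof.
move=> hrho hs ht; apply: avg_bound => // l.
apply: le_trans (ler_normD _ _) _; apply: lerD.
  by apply: le_sum_term => l'; apply: normr_ge0.
exact: (psi_bnd l hs (ht l)).
Qed.

Lemma a1 : Vdual1 (fun k => - w_k0 q M T tau_s k) q M T <= 0.
Proof.
set mu := fun k => _.
apply: sup_le_all.
  by exists (inf [set g | exists ta, strat2 ta /\ g = pay_dual1 mu q M T p sigma_s ta]),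
    p, sigma_s; split => //; split => //; case: hsig.
move=> y [pi [sg [hpi [hsg ->]]]].
apply: (@le_trans _ _ (pay_dual1 mu q M T pi sg tau_s)).
  apply: (inf_le_el (C := - (\sum_k `|mu k| + Bg))); last by exists tau_s; split => //; case: htau.
  by move=> z0 [ta [hta ->]]; apply: normlo; apply: pay1_bnd.
apply: sumr_le0 => k _; apply: mulr_ge0_le0; first exact: hpi.1.
rewrite /mu addrC subr_le0.
apply: (sup_ge_el (C := Bg)); last by exists (sg k).
by move=> z [s [vs ->]]; apply: normhi; apply: phi_bnd => //; case: htau.
Qed.

Lemma b1 mu : \sum_k p k * mu k + guar1 p q M T sigma_s <= Vdual1 mu q M T.
Proof.
have payE : forall ta, pay_dual1 mu q M T p sigma_s ta = \sum_k p k * mu k + gam sigma_s ta.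
  by move=> ta; rewrite /pay_dual1 gammaE -big_split; apply: eq_bigr => k _; rewrite mulrDr.
apply: (@le_trans _ _ (inf [set g | exists ta, strat2 ta /\ g = pay_dual1 mu q M T p sigma_s ta])).
  apply: le_inf_all; first by exists (pay_dual1 mu q M T p sigma_s tau_s), tau_s; split => //; case: htau.
  by move=> z [ta [hta ->]]; rewrite payE lerD2l; apply: g1 => //; case: hsig.
apply: (sup_ge_el (C := \sum_k `|mu k| + Bg)); last first.
  by exists p, sigma_s; split => //; split => //; case: hsig.
move=> z [pi [sg [hpi [hsg ->]]]].
apply: (@le_trans _ _ (pay_dual1 mu q M T pi sg tau_s)).
  apply: (inf_le_el (C := - (\sum_k `|mu k| + Bg))); last by exists tau_s; split => //; case: htau.
  by move=> z0 [ta [hta ->]]; apply: normlo; apply: pay1_bnd.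
by apply: normhi; apply: pay1_bnd => //; case: htau.
Qed.

Lemma a2 : 0 <= Vdual2 p (fun l => - u_l0 p M T sigma_s l) M T.
Proof.
set nu := fun l => _.
apply: (@le_trans _ _ (inf [set g | exists rho ta, is_dist rho /\ strat2 ta /\
                     g = pay_dual2 p nu M T sigma_s rho ta])).
  apply: le_inf_all.
    by exists (pay_dual2 p nu M T sigma_s q tau_s), q, tau_s; split => //; split => //; case: htau.
  move=> z [rho [ta [hrho [hta ->]]]].
  apply: sumr_ge0 => l _; apply: mulr_ge0; first exact: hrho.1.
  rewrite /nu addrC subr_ge0.
  apply: (inf_le_el (C := - Bg)); last by exists (ta l).
  by move=> y [t [vt ->]]; apply: normlo; apply: psi_bnd => //; case: hsig.
apply: (sup_ge_el (C := \sum_l `|nu l| + Bg)); last first.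
  by exists sigma_s; split => //; case: hsig.
move=> z [sg [hsg ->]].
apply: (@le_trans _ _ (pay_dual2 p nu M T sg q tau_s)).
  apply: (inf_le_el (C := - (\sum_l `|nu l| + Bg))); last first.
    by exists q, tau_s; split => //; split => //; case: htau.
  by move=> y [rho [ta [hrho [hta ->]]]]; apply: normlo; apply: pay2_bnd.
by apply: normhi; apply: pay2_bnd => //; case: htau.
Qed.

Lemma b2 nu : Vdual2 p nu M T <= \sum_l q l * nu l + guar2 p q M T tau_s.
Proof.
have payE : forall sg, pay_dual2 p nu M T sg q tau_s = \sum_l q l * nu l + gam sg tau_s.
  by move=> sg; rewrite /pay_dual2 gamE2 -big_split; apply: eq_bigr => l _; rewrite mulrDr.
apply: sup_le_all.
  by exists (inf [set g | exists rho ta, is_dist rho /\ strat2 ta /\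
                     g = pay_dual2 p nu M T sigma_s rho ta]), sigma_s; split => //; case: hsig.
move=> z [sg [hsg ->]].
apply: (@le_trans _ _ (pay_dual2 p nu M T sg q tau_s)).
  apply: (inf_le_el (C := - (\sum_l `|nu l| + Bg))); last first.
    by exists q, tau_s; split => //; split => //; case: htau.
  by move=> y [rho [ta [hrho [hta ->]]]]; apply: normlo; apply: pay2_bnd.
by rewrite payE lerD2l; apply: g3 => //; case: htau.
Qed.

Theorem main_result :
  let mu_s : K -> R := fun k => - w_k0 q M T tau_s k in
  let nu_s : L -> R := fun l => - u_l0 p M T sigma_s l in
  (forall mu : K -> R,
     Vdual1 mu_s q M T - \sum_(k : K) p k * mu_s k
       <= Vdual1 mu q M T - \sum_(k : K) p k * mu k) /\
  (forall nu : L -> R,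
     Vdual2 p nu M T - \sum_(l : L) q l * nu l
       <= Vdual2 p nu_s M T - \sum_(l : L) q l * nu_s l).
Proof.
move=> mu_s nu_s; have mm := minimax; split => [mu|nu].
  have e1 : \sum_k p k * mu_s k = - \sum_k p k * w_k0 q M T tau_s k.
    by rewrite -sumrN; apply: eq_bigr => k _; rewrite mulrN.
  have := a1; have := c1; have := b1 mu; rewrite e1 -/mu_s; lra.
have e1 : \sum_l q l * nu_s l = - \sum_l q l * u_l0 p M T sigma_s l.
  by rewrite -sumrN; apply: eq_bigr => l _; rewrite mulrN.
have := a2; have := c2; have := b2 nu; rewrite e1 -/nu_s; lra.
Qed.

End Final.

Theorem lemma2 (R : realType) (K L A B : finType)
    (M : K -> L -> A -> B -> R) (p : K -> R) (q : L -> R) (T : nat)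
    (hp : is_dist p) (hp_pos : forall k, 0 < p k)
    (hq : is_dist q) (hq_pos : forall l, 0 < q l)
    (sigma_s : K -> bstrat1 R A B) (tau_s : L -> bstrat2 R A B)
    (hsig : security1 p q M T sigma_s) (htau : security2 p q M T tau_s) :
  let mu_s : K -> R := fun k => - w_k0 q M T tau_s k in
  let nu_s : L -> R := fun l => - u_l0 p M T sigma_s l in
  (forall mu : K -> R,
     Vdual1 mu_s q M T - \sum_(k : K) p k * mu_s k
       <= Vdual1 mu q M T - \sum_(k : K) p k * mu k) /\
  (forall nu : L -> R,
     Vdual2 p nu M T - \sum_(l : L) q l * nu l
       <= Vdual2 p nu_s M T - \sum_(l : L) q l * nu_s l).
Proof.
case: (pickP (fun _ : K => true)) => [k0 _|K0]; last first.
  by have := hp.2; rewrite big_pred0 // => /eqP; rewrite eq_sym oner_eq0.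
case: (pickP (fun _ : L => true)) => [l0 _|L0]; last first.
  by have := hq.2; rewrite big_pred0 // => /eqP; rewrite eq_sym oner_eq0.
case: (pickP (fun _ : A => true)) => [a0 _|A0]; last first.
  have := (hsig.1 k0 [::] [::]).2.
  by rewrite big_pred0 // => /eqP; rewrite eq_sym oner_eq0.
case: (pickP (fun _ : B => true)) => [b0 _|B0]; last first.
  have := (htau.1 l0 [::] [::]).2.
  by rewrite big_pred0 // => /eqP; rewrite eq_sym oner_eq0.
exact: (main_result a0 b0 hp hq hsig htau).
Qed.
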